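(* Let $G$ be a finite abelian group with $|G|\ge 3$. Then \[ \mathsf{BO}(|G|-2,G)=\begin{cases}|G|-2, & \text{if } |G| \text{ is odd},\\ |G|+1, & \text{if } \exp(G)=2 \text{ or } |G|=4,\\ |G|-1, & \text{otherwise.}\end{cases} \]
   Context: Groups are written additively. For a positive integer $k$, a set $\{g_1,\dots,g_k\}$ of $k$ distinct elements of a finite abelian group $G$ is called $k$-barycentric if $\sum_{i=1}^k g_i = k\,g_j$ for some $1\le j\le k$. The $k$-th barycentric Olson constant $\mathsf{BO}(k,G)$ is the smallest integer $\ell$ such that every subset $A\subseteq G$ with $|A|\ge \ell$ contains a $k$-barycentric subset (so that always $\mathsf{BO}(k,G)\le |G|+1$). $\exp(G)$ denotes the exponent of $G$. *)

(* Defs.v *)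
(* Groups written multiplicatively (finGroupType); the
   abelian hypothesis is [abelian [set: gT]]. *)
From mathcomp Require Import all_boot all_fingroup all_solvable.
Set Implicit Arguments. Unset Strict Implicit. Unset Printing Implicit Defensive.
Local Open Scope group_scope.

Definition barycentric (gT : finGroupType) (k : nat) (S : {set gT}) : bool :=
  (#|S| == k) && [exists j in S, \prod_(g in S) g == j ^+ k].

Definition BO_prop (gT : finGroupType) (k l : nat) : bool :=
  [forall A : {set gT}, (l <= #|A|) ==>
     [exists S : {set gT}, (S \subset A) && barycentric k S]].

Lemma BO_prop_top (gT : finGroupType) (k : nat) : exists l, BO_prop gT k l.
Proof.
exists #|gT|.+1; apply/forallP => A; apply/implyP => H.
by have := max_card A; rewrite leqNgt H.
Qed.

Definition BO (gT : finGroupType) (k : nat) : nat := ex_minn (BO_prop_top gT k).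

(* Main.v *)
From HB Require Import structures.
Require Import Defs.
From mathcomp Require Import all_boot all_fingroup all_solvable.
From mathcomp Require Import zify.
Set Implicit Arguments. Unset Strict Implicit. Unset Printing Implicit Defensive.
Local Open Scope group_scope.

Lemma BO_mono (gT : finGroupType) k l l' :
  BO_prop gT k l -> (l <= l')%N -> BO_prop gT k l'.
Proof.
move=> /forallP H le; apply/forallP => A; apply/implyP => hA.
by have := H A; rewrite (leq_trans le hA).
Qed.

Lemma BO_eq (gT : finGroupType) k v :
  BO_prop gT k v -> (0 < v)%N -> ~~ BO_prop gT k v.-1 -> BO gT k = v.
Proof.
move=> Hv v0 Hn; rewrite /BO; case: ex_minnP => m Hm Hmin.
apply/eqP; rewrite eqn_leq Hmin //=; rewrite leqNgt; apply/negP => lt.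
by move: Hn; rewrite (BO_mono Hm) // -ltnS prednK.
Qed.

Lemma subset_card (T : finType) (A : {set T}) k :
  (k <= #|A|)%N -> exists2 S : {set T}, S \subset A & #|S| = k.
Proof.
elim: k => [|k IH] hk; first by exists set0; rewrite ?sub0set ?cards0.
have [S SA cS] := IH (ltnW hk).
have : ~~ (A \subset S) by apply/negP => /subset_leq_card; rewrite cS leqNgt hk.
case/subsetPn => x xA xS.
exists (x |: S); first by rewrite subUset sub1set xA SA.
by rewrite cardsU1 xS cS.
Qed.

Section Ab.
Variable gT : finGroupType.
Hypothesis mulC : commutative (@mulg gT).
HB.instance Definition _ := SemiGroup.isCommutativeLaw.Build gT (@mulg gT) mulC.
Local Notation n := #|gT|.
Definition sig := \prod_(g : gT) g.

Lemma mulgCA' (x y z : gT) : x * (y * z) = y * (x * z).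
Proof. by rewrite !mulgA (mulC x y). Qed.
Lemma mulgAC' (x y z : gT) : x * y * z = x * z * y.
Proof. by rewrite -!mulgA (mulC y z). Qed.

Lemma expgn (x : gT) : x ^+ n = 1.
Proof. by have := expg_cardG (in_setT x); rewrite cardsT. Qed.

Lemma expgn2 (x : gT) : (2 <= n)%N -> x ^+ (n - 2) = (x ^+ 2)^-1.
Proof. by move=> h; apply: (mulIg (x ^+ 2)); rewrite mulVg -expgD subnK // expgn. Qed.

Lemma prod_split (S : {set gT}) :
  sig = (\prod_(g in S) g) * \prod_(g in ~: S) g.
Proof.
rewrite /sig (bigID (fun g => g \in S)) /=; congr (_ * _).
by apply: eq_bigl => g; rewrite in_setC.
Qed.

Lemma prodS (S : {set gT}) :
  \prod_(g in S) g = sig * (\prod_(g in ~: S) g)^-1.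
Proof. by rewrite (prod_split S) mulgK. Qed.

Lemma prod2 (a b : gT) : a != b -> \prod_(g in [set a; b]) g = a * b.
Proof.
move=> ab; rewrite (big_setD1 a) ?setU11 //= setU1K ?big_set1 //.
by rewrite in_set1.
Qed.

Lemma compl2 (S : {set gT}) : (2 <= n)%N -> #|S| = (n - 2)%N ->
  exists a b, a != b /\ ~: S = [set a; b].
Proof.
idtac.
move=> h.
move=> cS.
 suff /cards2P : #|~: S| == 2 by [].
have := cardsC S; rewrite cS => e.
by rewrite -(eqn_add2l (n - 2)) e subnK.
Qed.



Lemma half_bound (Q : {set gT}) y :
  (forall q, q \in Q -> y * q \notin Q) -> (#|Q| + #|Q| <= n)%N.
Proof.
move=> H.
have : [set y * q | q in Q] \subset ~: Q.
  by apply/subsetP => _ /imsetP [q qQ ->]; rewrite in_setC H.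
move/subset_leq_card; rewrite card_imset; last exact: mulgI.
by rewrite -(leq_add2l #|Q|) cardsC.
Qed.

Lemma sig_inv : sig^-1 = sig.
Proof.
rewrite /sig -big_rev -prodgV big_rev (reindex_inj invg_inj) /=.
by apply: eq_bigr => g _; rewrite invgK.
Qed.

Lemma sig_odd : odd n -> sig = 1.
Proof.
move=> on; have s2 : sig ^+ 2 = 1 by rewrite expgS expg1 -{1}sig_inv mulVg.
have := expgn sig; rewrite -(odd_double_half n) on -mul2n expgD expgM s2 expg1n.
by rewrite expg1 mulg1.
Qed.

Lemma sq_odd (x : gT) m : x ^+ 2 = 1 -> x ^+ m = x ^+ odd m.
Proof.
move=> h; rewrite -{1}(odd_double_half m) -mul2n expgD expgM h expg1n mulg1.
by [].
Qed.

Lemma pair_prod (x : gT) : x != 1 -> (forall g : gT, g ^+ 2 = 1) ->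
  forall m (A : {set gT}), #|A| = (m.*2)%N ->
  (forall g, g \in A -> x * g \in A) -> \prod_(g in A) g = x ^+ m.
Proof.
move=> x1 sq; elim=> [|m IH] A cA cl.
  by rewrite (cards0_eq cA) big_set0.
have : (0 < #|A|)%N by rewrite cA doubleS.
case/card_gt0P => g gA.
have xgA := cl g gA.
have xgg : x * g != g.
  by apply/eqP => /(congr1 (fun t => t * g^-1)); rewrite mulgK mulgV; apply/eqP.
have xinv : x^-1 = x by apply: (mulgI x); rewrite mulgV -expg2 sq.
rewrite (big_setD1 g gA) (big_setD1 (x * g)) /=; last by rewrite !inE xgg.
rewrite IH.
- by rewrite mulgA mulgCA' -expg2 sq mulg1 -expgS.
- move: cA; rewrite (cardsD1 g A) gA (cardsD1 (x * g) (A :\ g)) !inE xgg xgA.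
  by rewrite doubleS add1n add1n => -[] [].
move=> h; rewrite !inE => /and3P [h1 h2 hA].
rewrite cl // andbT; apply/andP; split.
  by apply: contra h2 => /eqP /mulgI ->.
apply: contra h1 => /eqP <-; by rewrite mulgA -expg2 sq mul1g.
Qed.

Lemma sig_exp2 : (3 <= n)%N -> (forall g : gT, g ^+ 2 = 1) -> sig = 1.
Proof.
move=> n3 sq.
have : ~~ ([set: gT] \subset [set 1]).
  by apply/negP => /subset_leq_card; rewrite cardsT cards1 leqNgt (leq_trans _ n3).
case/subsetPn => x _; rewrite in_set1 => x1.
have : ~~ ([set: gT] \subset [set 1; x]).
  apply/negP => /subset_leq_card; rewrite cardsT cards2 leqNgt.
  by rewrite (leq_trans _ n3) // ltnS; case: (_ != _).
case/subsetPn => y _; rewrite !inE negb_or => /andP [y1 yx].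
have [on|ev] := boolP (odd n); first exact: sig_odd.
have cl (z g : gT) : g \in [set: gT] -> z * g \in [set: gT] by move=> _; apply: in_setT.
have ct : #|[set: gT]| = ((n./2).*2)%N by rewrite cardsT halfK (negbTE ev) subn0.
have ex := pair_prod x1 sq ct (cl x).
have ey := pair_prod y1 sq ct (cl y).
have es : sig = \prod_(g in [set: gT]) g by apply: eq_bigl => g; rewrite inE.
move: ex ey; rewrite -es (sq_odd _ (sq x)) (sq_odd _ (sq y)).
by case: (odd _) => //= -> /eqP; rewrite !expg1 eq_sym (negbTE yx).
Qed.



Lemma low_fail k : (0 < k)%N -> (k <= n)%N -> ~~ BO_prop gT k k.-1.
Proof.
move=> k0 kn; apply/negP => /forallP H.
have kA : (k.-1 <= #|[set: gT]|)%N.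
  rewrite cardsT.
  idtac.
  exact: leq_trans (leq_pred k) kn.
have [A _ cA] := subset_card kA.
move: (H A). rewrite cA. idtac. rewrite leqnn. idtac. move=> /existsP [S /andP [SA /andP [/eqP cS _]]].
have := subset_leq_card SA; rewrite cS cA.
by case: k k0 {kn kA H cA cS} => // k _; rewrite /= ltnn.
Qed.

Lemma odd_case : (3 <= n)%N -> odd n -> BO gT (n - 2) = (n - 2)%N.
Proof.
move=> n3 on; have n2 : (2 <= n)%N by apply: ltnW.
apply: BO_eq; last by apply: low_fail; rewrite ?subn_gt0 ?leq_subr.
- apply/forallP => A; apply/implyP => hA.
  have [S SA cS] := subset_card hA.
  have [a [b [ab eS]]] := compl2 n2 cS.
  apply/existsP; exists S; rewrite SA /barycentric cS eqxx /=.
  pose j := (a * b) ^+ (n.+1)./2.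
  have j2 : j ^+ 2 = a * b.
    by rewrite /j -expgM muln2 halfK /= on subn0 expgS expgn mulg1.
  apply/existsP; exists j; apply/andP; split.
    rewrite -[S]setCK in_setC eS !inE negb_or; apply/andP; split; apply/eqP => ja.
      by move: j2; rewrite ja expg2 => /mulgI /eqP; rewrite (negbTE ab).
    by move: j2; rewrite ja expg2 => /mulIg /eqP; rewrite eq_sym (negbTE ab).
  by rewrite (prodS S) eS prod2 // sig_odd // mul1g expgn2 // j2.
- by rewrite subn_gt0.
Qed.



Lemma even_low : (3 <= n)%N -> ~~ odd n -> ~~ BO_prop gT (n - 2) (n - 2).
Proof.
move=> n3 ev; have n2 : (2 <= n)%N by apply: ltnW.
have n4 : (4 <= n)%N.
  have key m : (3 <= m)%N -> ~~ odd m -> (4 <= m)%N by case: m => [|[|[|[|m]]]].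
  exact: key.
have d2 : (2 %| #|[set: gT]|)%N by rewrite cardsT dvdn2.
have [z _ oz] := Cauchy (isT : prime 2) d2.
have z2 : z ^+ 2 = 1 by rewrite -oz expg_order.
have z1 : z != 1 by rewrite -order_eq1 oz.
pose Q := [set g ^+ 2 | g in [set: gT]].
have Qn : (#|Q| < #|[set: gT]|)%N.
  rewrite ltn_neqAle leq_imset_card andbT; apply/negP => /imset_injP inj.
  have := inj z 1 (in_setT z) (in_setT 1); rewrite expg1n z2 => /(_ erefl) /eqP.
  by rewrite (negbTE z1).
have : ~~ ([set: gT] \subset Q).
  by apply/negP => /subset_leq_card; rewrite leqNgt Qn.
case/subsetPn => y _ yQ.
pose Q' := [set sig * g ^+ 2 | g in [set: gT]].
have hQ' : (#|Q'| + #|Q'| <= n)%N.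
  apply: (half_bound (y := y)) => _ /imsetP [g _ ->].
  apply/negP => /imsetP [h _ eh].
  have e2 : y * g ^+ 2 = h ^+ 2.
    by apply: (mulgI sig); rewrite -eh mulgCA' mulgA.
  move: yQ; rewrite /Q; apply/negP/negPn; apply/imsetP; exists (h * g^-1); first exact: in_setT.
  rewrite expgMn; last exact: mulC.
  by rewrite -e2 expgVn mulgK.
have : ~~ ([set: gT] \subset 1 |: Q').
  apply/negP => /subset_leq_card; apply/negP; rewrite cardsT -ltnNge cardsU1.
  apply: (leq_ltn_trans (leq_add (leq_b1 _) (leqnn _))).
  have key (q m : nat) : (q + q <= m)%N -> (4 <= m)%N -> (1 + q < m)%N by lia.
  exact: key hQ' n4.
case/subsetPn => c _; rewrite !inE negb_or => /andP [c1 cQ].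
apply/negP => /forallP /(_ (~: [set 1; c])) /implyP.
have cA : #|~: [set 1; c]| = (n - 2)%N.
  by have := cardsC [set 1; c]; rewrite cards2 eq_sym c1 => <-; rewrite addKn.
rewrite cA leqnn => /(_ isT) /existsP [S /andP [SA /andP [cS /existsP [j /andP [jS e]]]]].
have eS : S = ~: [set 1; c] by apply/eqP; rewrite eqEcard SA cA (eqP cS) leqnn.
have c1' : (1 : gT) != c by rewrite eq_sym.
move: e; rewrite (prodS S) eS setCK prod2 // mul1g expgn2 // => /eqP e.
move: cQ; apply/negP/negPn; apply/imsetP; exists j; first exact: in_setT.
by rewrite -[sig](mulgVK c) e mulgAC' mulVg mul1g.
Qed.



Lemma top_BO : ~~ BO_prop gT (n - 2) n -> BO gT (n - 2) = n.+1.
Proof.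
move=> H; apply: BO_eq => //; apply/forallP => A; apply/implyP.
by rewrite ltnNge max_card.
Qed.

Lemma exp2_fail : (3 <= n)%N -> (forall g : gT, g ^+ 2 = 1) -> ~~ BO_prop gT (n - 2) n.
Proof.
move=> n3 sq; have n2 : (2 <= n)%N by apply: ltnW.
apply/negP => /forallP /(_ [set: gT]) /implyP; rewrite cardsT leqnn.
move=> /(_ isT) /existsP [S /andP [_ /andP [/eqP cS /existsP [j /andP [jS e]]]]].
have [a [b [ab eS]]] := compl2 n2 cS.
move: e; rewrite (prodS S) eS prod2 // sig_exp2 // mul1g expgn2 // sq invg1.
rewrite invg_eq1 => /eqP e.
have binv : b^-1 = b by apply: (mulgI b); rewrite mulgV -expg2 sq.
move: ab; rewrite -[a]mulg1 -(mulgV b) binv mulgA e mul1g eqxx.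
by [].
Qed.

Lemma four_fail : n = 4 -> ~~ BO_prop gT (n - 2) n.
Proof.
move=> n4; apply/negP => /forallP /(_ [set: gT]) /implyP; rewrite cardsT leqnn.
move=> /(_ isT) /existsP [S /andP [_ /andP [cS /existsP [j /andP [jS e]]]]].
move: cS e; rewrite n4 /= => /cards2P [a [b [ab eS]]].
move: jS; rewrite eS prod2 // !inE => /orP [] /eqP -> /eqP; rewrite expg2.
  by move/mulgI => eb; move: ab; rewrite eb eqxx.
by move/mulIg => ea; move: ab; rewrite ea eqxx.
Qed.



Lemma gen_case (z : gT) : (3 <= n)%N -> n != 4 -> ~~ odd n -> z ^+ 2 != 1 ->
  BO_prop gT (n - 2) (n - 1).
Proof.
move=> n3 nn4 ev z2; have n2 : (2 <= n)%N by apply: ltnW.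
have n6 : (6 <= n)%N.
  have key m : (3 <= m)%N -> ~~ odd m -> m != 4 -> (6 <= m)%N.
    by case: m => [|[|[|[|[|[|m]]]]]].
  exact: key.
apply/forallP => A; apply/implyP => hA.
have [S0 S0A cS0] := subset_card hA.
have c1 : #|~: S0| == 1%N.
  have := cardsC S0; rewrite cS0 => e.
  by rewrite -(eqn_add2l (n - 1)) e subnK // ltnW.
case/cards1P: c1 => c eS0.
pose T := [set g | sig * g ^+ 2 * c^-1 == c].
have hT : (#|T| + #|T| <= n)%N.
  apply: (half_bound (y := z)) => q; rewrite !inE => /eqP qT.
  rewrite expgMn; last exact: mulC.
  rewrite mulgCA' -mulgA qT; apply/eqP => /(congr1 (fun t => t * c^-1)).
  by rewrite mulgK mulgV; apply/eqP.
pose bad := T :|: [set c; c * sig^-1].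
have : ~~ ([set: gT] \subset bad).
  apply/negP => /subset_leq_card; apply/negP; rewrite cardsT -ltnNge.
  apply: (leq_ltn_trans (leq_card_setU _ _)).
  have h2 : (#|[set c; (c * sig^-1)%g]| <= 2)%N by rewrite cards2; case: (_ != _).
  apply: (leq_ltn_trans (leq_add (leqnn _) h2)).
  have key (q m : nat) : (q + q <= m)%N -> (6 <= m)%N -> (q + 2 < m)%N by lia.
  exact: key hT n6.
case/subsetPn => g _; rewrite !inE !negb_or => /and3P [gT' gc gcs].
pose b := sig * g ^+ 2 * c^-1.
have bc : b != c by [].
have gb : g != b.
  apply: contra gcs => /eqP eg.
  have h1 : sig * g * c^-1 = 1.
    apply: (mulgI g); rewrite mulg1; transitivity b; last by rewrite -eg.
    by rewrite /b expg2 !mulgA (mulC g sig).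
  move/eqP: h1; rewrite -eq_mulgV1 => /eqP e2.
  by rewrite -e2 (mulC sig g) mulgK.
apply/existsP; exists (~: [set b; c]); apply/andP; split.
  apply: subset_trans S0A; rewrite -[S0]setCK eS0 setCS sub1set !inE eqxx orbT.
  by [].
rewrite /barycentric; apply/andP; split.
  have := cardsC [set b; c]; rewrite cards2 bc => e.
  by rewrite -(eqn_add2l 2) e subnKC.
apply/existsP; exists g; rewrite !inE negb_or gb gc /=.
rewrite (prodS (~: [set b; c])) setCK prod2 // /b mulgVK invMg mulgCA' mulgV mulg1.
by rewrite expgn2.
Qed.

End Ab.

Local Close Scope group_scope.

Theorem mainTheorem2 (gT : finGroupType) (Hab : abelian [set: gT])
    (Hcard : 3 <= #|gT|) :
  BO gT (#|gT| - 2) =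
    (if odd #|gT| then #|gT| - 2
     else if (exponent [set: gT] == 2) || (#|gT| == 4) then #|gT| + 1
     else #|gT| - 1).
Proof.
have mulC : commutative (@mulg gT).
  by move=> x y; exact: (centsP Hab x (in_setT x) y (in_setT y)).
case: ifP => on; first exact: odd_case.
have ev : ~~ odd #|gT| by rewrite on.
case: ifP => [/orP [/eqP e2 | /eqP n4] | h].
- rewrite addn1; apply: top_BO; apply: exp2_fail mulC Hcard _.
  by move=> g; have := expg_exponent (in_setT g); rewrite e2.
- by rewrite addn1; apply: top_BO; apply: four_fail mulC n4.
have [z z2 | all] := pickP (fun z : gT => (z ^+ 2 != 1)%g).
  have nn4 : #|gT| != 4 by apply/negP => /eqP e4; move: h; rewrite e4 eqxx orbT.
  have gc := gen_case mulC Hcard nn4 ev z2.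
  apply: BO_eq; first exact: gc.
  - by rewrite subn_gt0 (leq_trans _ Hcard).
  - by rewrite -subn1 -subnDA; apply: even_low mulC Hcard ev.
exfalso; have : (exponent [set: gT] %| 2)%N.
  by apply/exponentP => x _; move/negbFE/eqP: (all x).
have := exponent_gt0 [set: gT]%G; move: h.
case E: (exponent _) => [|[|[|e]]] //= _ _ _.
have : [set: gT] \subset [set 1%g].
  apply/subsetP => x _; rewrite inE.
  have := @expg_exponent _ x [set: gT] (in_setT x).
  by rewrite E expg1 => ->.
move/subset_leq_card; rewrite cardsT cards1 => h1.
by move: (leq_trans Hcard h1).
Qed.
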